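(* Let $n\ge 1$ be an integer and $\alpha,\beta\in(0,1]$. For every configuration $\mathcal{C}\in\{\bullet,\circ\}^n$ set $$\mathbb{P}^{\mathrm{st}}_n\{\mathcal{C}\} := Z_n^{-1}\sum_{T\in\mathcal{T}_n,\ R(T)=\mathcal{C}} \mu(T), \qquad Z_n:=\sum_{T\in\mathcal{T}_n}\mu(T),$$ where $\mu(T)=\alpha^{-l(T)}\beta^{-r(T)}$. Then $\mathbb{P}^{\mathrm{st}}_n$ is a stationary measure of the $n$-site open-boundary TASEP with parameters $\alpha,\beta$. That is, for every $\mathcal{C}$, $$\mathbb{P}^{\mathrm{st}}_n\{\mathcal{C}\}\sum_{\mathcal{C}'}W(\mathcal{C}\to\mathcal{C}')=\sum_{\mathcal{C}'}\mathbb{P}^{\mathrm{st}}_n\{\mathcal{C}'\}\,W(\mathcal{C}'\to\mathcal{C}).$$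
   Context: Open-boundary TASEP on $n$ sites: this is the continuous-time Markov chain on $\{\bullet,\circ\}^n$ (strings of length $n$, where $\bullet$ denotes a particle and $\circ$ a hole). Its transition rates are as follows, with $\mathcal{A},\mathcal{A}'$ arbitrary strings: - $W(\circ\mathcal{A}\to\bullet\mathcal{A})=\alpha$; - $W(\mathcal{A}\bullet\to\mathcal{A}\circ)=\beta$; - $W(\mathcal{A}\bullet\circ\mathcal{A}'\to\mathcal{A}\circ\bullet\mathcal{A}')=1$; - $W(\mathcal{C}\to\mathcal{C}')=0$ for all other pairs. A plane binary tree is a finite rooted tree in which every vertex is either an endpoint (a leaf, with no children) or has exactly two children, an ordered left child and right child. Every non-root vertex is thus either a left descendent or a right descendent of its parent. The endpoints are ordered from left to right in the planar order. $\mathcal{T}_n$ denotes the set of plane binary trees with exactly $n+2$ endpoints. The reduced configuration of $T\in\mathcal{T}_n$ is $R(T)=(t_1,\dots,t_n)\in\{\bullet,\circ\}^n$. Here $t_k=\bullet$ if the $(k+1)$-th endpoint from the left is a left child, and $t_k=\circ$ if it is a right child. The leftmost and rightmost endpoints are ignored. $l(T)$ (respectively $r(T)$) is the number of vertices lying strictly between the leftmost (respectively rightmost) endpoint and the root on the path joining them, excluding both the endpoint and the root. *)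

(* Defs.v *)
From HB Require Import structures.
From mathcomp Require Import all_boot all_order all_algebra.
Set Implicit Arguments. Unset Strict Implicit. Unset Printing Implicit Defensive.
Import Order.TTheory GRing.Theory Num.Theory.

Inductive btree : Type := Leaf | Node of btree & btree.

Fixpoint btree_eqb (s t : btree) : bool :=
  match s, t with
  | Leaf, Leaf => true
  | Node s1 s2, Node t1 t2 => btree_eqb s1 t1 && btree_eqb s2 t2
  | _, _ => false
  end.

Lemma btree_eqP : Equality.axiom btree_eqb.
Proof.
elim=> [|s1 IH1 s2 IH2] [|t1 t2] /=; try by constructor.
by apply: (iffP andP) => [[/IH1 -> /IH2 ->]|[<- <-]]; split; [apply/IH1|apply/IH2].
Qed.

HB.instance Definition _ := hasDecEq.Build btree btree_eqP.

Fixpoint nleaves (t : btree) : nat :=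
  match t with Leaf => 1 | Node l r => nleaves l + nleaves r end.

Fixpoint trees_depth (d : nat) : seq btree :=
  match d with
  | 0 => [:: Leaf]
  | d'.+1 => Leaf :: [seq Node l r | l <- trees_depth d', r <- trees_depth d']
  end.

(* T_n : plane binary trees with exactly n+2 endpoints (a tree with n+2
   endpoints has depth at most n+1), listed without repetition. *)
Definition T_ (n : nat) : seq btree :=
  undup [seq t <- trees_depth n.+1 | nleaves t == n.+2].

(* For each endpoint in planar (left-to-right) order: true iff it is a left
   child.  [side] is the side of the current subtree w.r.t. its parent. *)
Fixpoint leaf_sides (t : btree) (side : bool) : seq bool :=
  match t with
  | Leaf => [:: side]
  | Node l r => leaf_sides l true ++ leaf_sides r false
  end.

Definition endpoint_sides (t : btree) : seq bool :=
  match t with Leaf => [::] | Node l r => leaf_sides l true ++ leaf_sides r false end.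

(* reduced configuration R(T): drop leftmost and rightmost endpoints;
   true = particle (left child), false = hole (right child) *)
Definition reduced (t : btree) : seq bool :=
  let s := endpoint_sides t in take (size s - 2) (behead s).

Fixpoint ldepth (t : btree) : nat :=
  match t with Leaf => 0 | Node l _ => (ldepth l).+1 end.
Fixpoint rdepth (t : btree) : nat :=
  match t with Leaf => 0 | Node _ r => (rdepth r).+1 end.

(* l(T), r(T): number of vertices strictly between the endpoint and the root *)
Definition lT (t : btree) : nat := (ldepth t).-1.
Definition rT (t : btree) : nat := (rdepth t).-1.

Local Open Scope ring_scope.

Definition mu (R : fieldType) (alpha beta : R) (t : btree) : R :=
  alpha ^- lT t * beta ^- rT t.

Definition Zn (R : fieldType) (alpha beta : R) (n : nat) : R :=
  \sum_(t <- T_ n) mu alpha beta t.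

Definition Pst (R : fieldType) (alpha beta : R) (n : nat) (C : n.-tuple bool) : R :=
  (Zn alpha beta n)^-1 * \sum_(t <- T_ n | reduced t == val C) mu alpha beta t.

Definition W (R : ringType) (alpha beta : R) (n : nat) (C C' : n.-tuple bool) : R :=
  let c := val C in let c' := val C' in
  (if (0 < n)%N && ~~ nth false c 0 && (c' == set_nth false c 0 true)
   then alpha else 0)
  + (if (0 < n)%N && nth false c n.-1 && (c' == set_nth false c n.-1 false)
     then beta else 0)
  + \sum_(i < n.-1)
      (if nth false c i && ~~ nth false c i.+1
          && (c' == set_nth false (set_nth false c i false) i.+1 true)
       then 1 else 0).

(* Main.v *)
Require Import Defs.
From HB Require Import structures.
From mathcomp Require Import all_boot all_order all_algebra.
From mathcomp Require Import zify ring.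
Import Order.TTheory GRing.Theory Num.Theory.
Set Implicit Arguments. Unset Strict Implicit. Unset Printing Implicit Defensive.

Lemma nleaves_gt0 t : (0 < nleaves t)%N.
Proof. elim: t => //= l IHl r _; by rewrite addn_gt0 IHl. Qed.

Lemma size_leaf_sides t b : size (leaf_sides t b) = nleaves t.
Proof. elim: t b => //= l IHl r IHr b; by rewrite size_cat IHl IHr. Qed.

Lemma head_leaf_sides t b : nth false (leaf_sides t b) 0 = (if t is Leaf then b else true).
Proof.
elim: t b => //= l IHl r _ b; rewrite nth_cat size_leaf_sides nleaves_gt0 IHl; by case: l {IHl}.
Qed.

Lemma last_leaf_sides t b x : last x (leaf_sides t b) = (if t is Leaf then b else false).
Proof.
elim: t b x => //= l _ r IHr b x; rewrite last_cat IHr; by case: r {IHr}.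
Qed.

Lemma sides_form t : t != Leaf -> leaf_sides t true = true :: rcons (reduced t) false.
Proof.
case: t => // l r _.
have h0 := head_leaf_sides (Node l r) true.
have hl := last_leaf_sides (Node l r) true false.
have hs := size_leaf_sides (Node l r) true.
have h2 : (2 <= nleaves (Node l r))%N.
  by rewrite /= -(addn1 1) leq_add // nleaves_gt0.
rewrite /reduced /=. rewrite /= in h0 hl hs.
move: h0 hl hs h2.
case: (leaf_sides l true ++ leaf_sides r false) => [|x s] //= -> .
case/lastP: s => [|w z]; first by move=> _ <-.
rewrite last_rcons => -> _ _.
rewrite size_rcons subSS subn1 /= -cats1 take_size_cat // cats1 //.

Qed.

Lemma reduced_of_sides t w : t != Leaf -> leaf_sides t true = true :: rcons w false -> reduced t = w.
Proof.
move=> /sides_form -> [] /rcons_inj [] //.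
Qed.

Fixpoint height t := match t with Leaf => 0 | Node l r => (maxn (height l) (height r)).+1 end.

Lemma mem_trees_depth d t : (t \in trees_depth d) = (height t <= d)%N.
Proof.
elim: d t => [|d IH] [|l r] //=.
all: try by rewrite inE.
rewrite inE /= ltnS geq_max -!IH.
  apply/allpairsP/andP => [[[x y] /= [hx hy [-> ->]]]|[hx hy]]; first by [].
  by exists (l, r).
Qed.

Lemma height_lt t : (height t < nleaves t)%N.
Proof.
elim: t => //= l IHl r IHr.
have := nleaves_gt0 l; have := nleaves_gt0 r. lia.
Qed.

Lemma mem_T n t : (t \in T_ n) = (nleaves t == n.+2).
Proof.
rewrite /T_ mem_undup mem_filter mem_trees_depth.
apply/andP/idP => [[]//|/eqP h]; split; first by rewrite h.
have := height_lt t; lia.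
Qed.

Lemma T_uniq n : uniq (T_ n).
Proof. exact: undup_uniq. Qed.

Fixpoint expand (i : nat) (t : btree) : btree :=
  match t with
  | Leaf => Node Leaf Leaf
  | Node l r => if (i < nleaves l)%N then Node (expand i l) r
                else Node l (expand (i - nleaves l) r)
  end.

Fixpoint contract (i : nat) (t : btree) : btree :=
  match t with
  | Leaf => Leaf
  | Node l r => if (l == Leaf) && (r == Leaf) then Leaf
      else if (i.+1 < nleaves l)%N then Node (contract i l) r
      else Node l (contract (i - nleaves l) r)
  end.

Lemma expand_neq i t : (expand i t == Leaf) = false.
Proof. by case: t => //= l r; case: ifP. Qed.

Lemma nleaves_expand i t : nleaves (expand i t) = (nleaves t).+1.
Proof.
elim: t i => //= l IHl r IHr i; case: ifP => _ /=; by rewrite ?IHl ?IHr ?addSn ?addnS.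
Qed.

Lemma contract_expand i t : (i < nleaves t)%N -> contract i (expand i t) = t.
Proof.
elim: t i => [|l IHl r IHr] i //= hi.
case: ifP => hl /=.
  by rewrite expand_neq /= nleaves_expand ltnS hl IHl.
rewrite expand_neq andbF.
have -> : (i.+1 < nleaves l)%N = false by apply/negbTE; move/negbT: hl; rewrite -!leqNgt; move/leqW.
rewrite IHr //; move/negbT: hl; rewrite -leqNgt => hl; lia.
Qed.

Lemma expand_contract t b i : (i.+1 < nleaves t)%N ->
  nth false (leaf_sides t b) i -> ~~ nth false (leaf_sides t b) i.+1 ->
  expand i (contract i t) = t.
Proof.
elim: t b i => [|l IHl r IHr] b i //= hi.
case: ifP => [/andP [/eqP El /eqP Er]|hLR]; first by subst; case: i hi.
rewrite !nth_cat !size_leaf_sides.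
case: (boolP (i.+1 < nleaves l)%N) => hi1.
  have hi0 : (i < nleaves l)%N := ltnW hi1.
  rewrite hi0 => h1 h2.
  have e := IHl true i hi1 h1 h2.
  have hn : nleaves l = (nleaves (contract i l)).+1 by rewrite -{1}e nleaves_expand.
  by rewrite /= -ltnS -hn hi1 e.
have [hlt|hge] := ltnP i (nleaves l).
  have ei : i = (nleaves l).-1 by move: hi1; rewrite -leqNgt => ?; lia.
  have e1 : (i.+1 - nleaves l)%N = 0%N by lia.
  rewrite e1 head_leaf_sides => h1 h2.
  have : nth false (leaf_sides l true) (size (leaf_sides l true)).-1 by rewrite size_leaf_sides -ei.
  rewrite nth_last last_leaf_sides => h3.
  have Hl : l = Leaf by move: h3; case: (l).
  have Hr : r = Leaf by move: h2; case: (r).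
  by rewrite Hl Hr in hLR.
move=> h1 h2.
rewrite /= ltnNge hge /= (IHr false) //.
- lia.
- by rewrite -subSn.
Qed.

Lemma drop_cat_le (T : Type) n (s1 s2 : seq T) : (n <= size s1)%N -> drop n (s1 ++ s2) = drop n s1 ++ s2.
Proof.
rewrite drop_cat leq_eqVlt => /orP [/eqP ->|-> //].
by rewrite ltnn subnn drop0 drop_size.
Qed.

Lemma sides_expand t b i : (i < nleaves t)%N ->
  leaf_sides (expand i t) b = take i (leaf_sides t b) ++ true :: false :: drop i.+1 (leaf_sides t b).
Proof.
elim: t b i => [|l IHl r IHr] b i /=; first by case: i.
move=> hi; case: ifP => hl /=.
  rewrite IHl // take_cat drop_cat_le size_leaf_sides ?hl // -catA //.
rewrite IHr; last by move/negbT: hl; rewrite -leqNgt => ?; lia.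
rewrite take_cat drop_cat !size_leaf_sides hl ltnNge leqW; last by rewrite leqNgt hl.
by rewrite /= -catA subSn // leqNgt hl.
Qed.

Lemma ldepth_expand i t : (i < nleaves t)%N -> ldepth (expand i t) = ldepth t + (i == 0%N).
Proof.
elim: t i => [|l IHl r IHr] i /=; first by case: i.
move=> hi; case: ifP => hl /=; first by rewrite IHl ?addSn.
have := nleaves_gt0 l; case: i {hi} hl => [|i] hl h0; first by rewrite h0 in hl.
by rewrite addn0.
Qed.

Lemma rdepth_expand i t : (i < nleaves t)%N -> rdepth (expand i t) = rdepth t + (i == (nleaves t).-1).
Proof.
elim: t i => [|l IHl r IHr] i /=; first by case: i.
move=> hi; case: ifP => hl /=.
  have := nleaves_gt0 r => hr.
  have -> : (i == (nleaves l + nleaves r).-1) = false by apply/eqP; lia.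
  by rewrite addn0.
rewrite IHr; last by move/negbT: hl; rewrite -leqNgt => ?; lia.
have := nleaves_gt0 r => hr.
move/negbT: hl; rewrite -leqNgt => hl.
congr (_ + nat_of_bool _).+1; apply/eqP/eqP; lia.
Qed.

Local Open Scope ring_scope.

Lemma eq_big_in (R : zmodType) (s : seq btree) (P Q : pred btree) (F G : btree -> R) :
  (forall t, t \in s -> P t = Q t) -> (forall t, t \in s -> Q t -> F t = G t) ->
  \sum_(t <- s | P t) F t = \sum_(t <- s | Q t) G t.
Proof.
move=> hPQ hFG; rewrite big_seq_cond [RHS]big_seq_cond; apply: eq_big => t.
  by case: (boolP (t \in s)) => //= /hPQ.
case/andP => hs hp; apply: (hFG t hs); by rewrite -(hPQ t hs).
Qed.

Lemma sum_expand (R : zmodType) n i (P : pred btree) (F : btree -> R) :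
  (i < n.+2)%N ->
  (forall t, P t -> nth false (leaf_sides t true) i && ~~ nth false (leaf_sides t true) i.+1) ->
  \sum_(t <- T_ n.+1 | P t) F t = \sum_(t <- T_ n | P (expand i t)) F (expand i t).
Proof.
move=> hi hP.
rewrite -(big_map (expand i) P F) -[LHS]big_filter -[RHS]big_filter.
apply: perm_big; apply: uniq_perm.
- by rewrite filter_uniq // T_uniq.
- rewrite filter_uniq // map_inj_in_uniq ?T_uniq // => x y hx hy e.
  rewrite mem_T in hx; rewrite mem_T in hy.
  rewrite -(@contract_expand i x) ?(eqP hx) // -(@contract_expand i y) ?(eqP hy) //.
  by rewrite e.
- move=> t; rewrite !mem_filter; case Pt: (P t) => //=; rewrite mem_T.
  apply/eqP/mapP => [h|[t0 h0 ->]].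
  + have /andP [h1 h2] := hP t Pt.
    have e := @expand_contract t true i (ltac:(rewrite h; lia)) h1 h2.
    exists (contract i t) => //.
    by rewrite mem_T; move: h; rewrite -{1}e nleaves_expand => -[->].
  + by rewrite nleaves_expand (eqP (_ : nleaves t0 == n.+2)) // -mem_T.
Qed.

Definition Fw (R : fieldType) (a b : R) n c := \sum_(t <- T_ n | reduced t == c) mu a b t.

Lemma T_nonleaf n t : t \in T_ n -> t != Leaf.
Proof. by rewrite mem_T; case: t. Qed.

Lemma size_reduced t : size (reduced t) = ((nleaves t) - 2)%N.
Proof.
rewrite /reduced size_take size_behead.
case: t => //= l r.
rewrite size_cat !size_leaf_sides.
have := nleaves_gt0 l; have := nleaves_gt0 r.
case: ifP; lia.
Qed.

Lemma size_reduced_T n t : t \in T_ n -> size (reduced t) = n.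
Proof. by rewrite mem_T size_reduced => /eqP ->; rewrite subSS subSS subn0. Qed.

Lemma reduced_Leaf : reduced Leaf = [::].
Proof. by []. Qed.

Lemma sides_expand_form t i : t != Leaf -> (i < nleaves t)%N ->
  leaf_sides (expand i t) true =
  take i (true :: rcons (reduced t) false) ++ true :: false :: drop i.+1 (true :: rcons (reduced t) false).
Proof. by move=> nl hi; rewrite sides_expand // sides_form. Qed.

Lemma exprVS (R : fieldType) (a : R) k : a ^- k.+1 = a^-1 * a ^- k.
Proof. by rewrite exprS invfM. Qed.

Lemma F_left (R : fieldType) (a b : R) n v :
  Fw a b n.+1 (false :: v) = a^-1 * Fw a b n v.
Proof.
rewrite /Fw (@sum_expand _ n 0%N) //; last first.
  move=> t /eqP e.
  have nl : t != Leaf by apply/negP => /eqP El; rewrite El in e.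
  by rewrite sides_form // e.
rewrite mulr_sumr; eapply eq_big_in => t ht.
  have nl := T_nonleaf ht.
  rewrite (@reduced_of_sides _ (false :: reduced t)) ?expand_neq //.
  by rewrite sides_expand_form ?nleaves_gt0 //= drop0.
move=> _.
have nl := T_nonleaf ht.
have hn : nleaves t = n.+2 by apply/eqP; rewrite -mem_T.
rewrite /mu /lT /rT ldepth_expand ?nleaves_gt0 // rdepth_expand ?nleaves_gt0 // hn /= addn0 addn1.
have : (0 < ldepth t)%N by case: (t) nl.
case: (ldepth t) => // k _ /=.
by rewrite exprVS mulrA.
Qed.

Lemma F_right (R : fieldType) (a b : R) n v : size v = n ->
  Fw a b n.+1 (rcons v true) = b^-1 * Fw a b n v.
Proof.
move=> hv.
rewrite /Fw (@sum_expand _ n n.+1) //; last first.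
  move=> t /eqP e.
  have nl : t != Leaf by apply/negP => /eqP El; rewrite El in e; case: (v) e.
  rewrite sides_form // e /= !nth_rcons size_rcons hv ltnSn ltnn eqxx /=.
  by rewrite ltnn eqxx.
rewrite mulr_sumr; eapply eq_big_in => t ht.
  have nl := T_nonleaf ht.
  have hs := size_reduced_T ht.
  rewrite (@reduced_of_sides _ (rcons (reduced t) true)); first by rewrite eqseq_rcons eqxx andbT.
    by rewrite expand_neq.
  rewrite sides_expand_form //; last by rewrite (eqP (_ : nleaves t == n.+2)) // -mem_T.
  rewrite /= -cats1 (take_size_cat _ hs) drop_oversize; last by rewrite size_cat hs addn1.
  by rewrite -!cats1 -catA.
move=> _.
have nl := T_nonleaf ht.
have hn : nleaves t = n.+2 by apply/eqP; rewrite -mem_T.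
rewrite /mu /lT /rT ldepth_expand ?hn // rdepth_expand ?hn //= eqxx addn0 addn1.
have : (0 < rdepth t)%N by case: (t) nl.
case: (rdepth t) => // k _ /=.
rewrite exprVS; by rewrite mulrCA.
Qed.

Lemma nth_size_cat0 (T : Type) (x0 : T) (u w : seq T) : nth x0 (u ++ w) (size u) = nth x0 w 0.
Proof. by rewrite nth_cat ltnn subnn. Qed.

Lemma nth_size_cat1 (T : Type) (x0 : T) (u w : seq T) : nth x0 (u ++ w) (size u).+1 = nth x0 w 1.
Proof. by rewrite nth_cat ltnNge leqnSn /= subSn // subnn. Qed.

Lemma split_eq (r u v : seq bool) bb : (size u < size r)%N ->
  (r == u ++ bb :: v) = [&& take (size u) r == u, nth false r (size u) == bb & drop (size u).+1 r == v].
Proof.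
move=> h.
have e : r = take (size u) r ++ nth false r (size u) :: drop (size u).+1 r.
  by rewrite -(drop_nth false h) cat_take_drop.
rewrite {1}e eqseq_cat; last by rewrite size_takel // ltnW.
by rewrite eqseq_cons.
Qed.

Lemma F_mid (R : fieldType) (a b : R) n u v : (size u + size v + 1)%N = n ->
  Fw a b n.+1 (u ++ true :: false :: v) = Fw a b n (u ++ true :: v) + Fw a b n (u ++ false :: v).
Proof.
move=> huv.
rewrite /Fw (@sum_expand _ n (size u).+1); first last.
- move=> t /eqP e.
  have nl : t != Leaf by apply/negP => /eqP El; rewrite El in e; case: (u) e.
  by rewrite sides_form // e /= -cats1 -catA nth_size_cat0 nth_size_cat1.
- lia.
set k := size u.
rewrite (@eq_big_in _ _ _ (fun t => (take k (reduced t) == u) && (drop k.+1 (reduced t) == v)) _ (mu a b)).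
- rewrite (bigID (fun t => nth false (reduced t) k)) /=; congr (_ + _); eapply eq_big_in => t ht //.
  + have hs := size_reduced_T ht.
    rewrite split_eq; last by rewrite hs; lia.
    rewrite eqb_id.
    by case: (take k (reduced t) == u); case: (drop k.+1 (reduced t) == v); case: (nth false (reduced t) k).
  + have hs := size_reduced_T ht.
    rewrite split_eq; last by rewrite hs; lia.
    rewrite eqbF_neg.
    by case: (take k (reduced t) == u); case: (drop k.+1 (reduced t) == v); case: (nth false (reduced t) k).
- move=> t ht.
  have nl := T_nonleaf ht.
  have hs := size_reduced_T ht.
  have hn : nleaves t = n.+2 by apply/eqP; rewrite -mem_T.
  have hk : (k < size (reduced t))%N by rewrite hs; lia.
  rewrite (@reduced_of_sides _ (take k (reduced t) ++ true :: false :: drop k.+1 (reduced t))).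
  + rewrite eqseq_cat; last by rewrite size_takel // ltnW.
    by rewrite eqseq_cons eqxx eqseq_cons eqxx.
  + by rewrite expand_neq.
  rewrite sides_expand_form //; last by rewrite hn; lia.
  rewrite /= -cats1 take_cat ifT //.
  rewrite cats1 drop_rcons //.
  by rewrite rcons_cat.
- move=> t ht _.
  have hn : nleaves t = n.+2 by apply/eqP; rewrite -mem_T.
  rewrite /mu /lT /rT ldepth_expand ?hn // ?rdepth_expand ?hn //; try lia.
  rewrite /= addn0; have -> : (k.+1 == n.+1) = false by apply/eqP; lia.
  by rewrite addn0.
Qed.

Lemma Sn_neq i : (i.+1 == i) = false.
Proof. by elim: i. Qed.
Lemma n_neqS i : (i == i.+1) = false.
Proof. by elim: i. Qed.

Lemma eq_seq_nth (c d : seq bool) : size c = size d -> (forall k, nth false c k = nth false d k) -> c = d.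
Proof. by move=> hs h; apply: (eq_from_nth (x0 := false) hs) => k _; exact: h. Qed.

Ltac nsn := repeat (rewrite nth_set_nth /=).

Lemma E1 (c c' : seq bool) n : size c = n.+1 -> size c' = n.+1 ->
  (~~ nth false c' 0 && (c == set_nth false c' 0 true)) = (nth false c 0 && (c' == set_nth false c 0 false)).
Proof.
move=> hc hc'; apply/andP/andP => [[/negbTE h /eqP e]|[h /eqP e]]; subst; split.
- by nsn.
- apply/eqP/eq_seq_nth; first by rewrite !size_set_nth; lia.
  move=> k; nsn; by case: (k =P 0%N) => [->|].
- by nsn.
- apply/eqP/eq_seq_nth; first by rewrite !size_set_nth; lia.
  move=> k; nsn; by case: (k =P 0%N) => [->|].
Qed.

Lemma E2 (c c' : seq bool) n : size c = n.+1 -> size c' = n.+1 ->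
  (nth false c' n && (c == set_nth false c' n false)) = (~~ nth false c n && (c' == set_nth false c n true)).
Proof.
move=> hc hc'; apply/andP/andP => [[h /eqP e]|[/negbTE h /eqP e]]; subst; split.
- by nsn; rewrite eqxx.
- apply/eqP/eq_seq_nth; first by rewrite !size_set_nth; lia.
  move=> k; nsn; by case: (k =P n) => [->|]; rewrite ?eqxx.
- by nsn; rewrite eqxx.
- apply/eqP/eq_seq_nth; first by rewrite !size_set_nth; lia.
  move=> k; nsn; by case: (k =P n) => [->|]; rewrite ?eqxx.
Qed.

Lemma E3 (c c' : seq bool) n i : size c = n.+1 -> size c' = n.+1 -> (i < n)%N ->
  (nth false c' i && ~~ nth false c' i.+1 && (c == set_nth false (set_nth false c' i false) i.+1 true))
  = (~~ nth false c i && nth false c i.+1 && (c' == set_nth false (set_nth false c i true) i.+1 false)).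
Proof.
move=> hc hc' hi; apply/andP/andP => [[/andP [h1 /negbTE h2] /eqP e]|[/andP [/negbTE h1 h2] /eqP e]]; subst; split.
- by nsn; rewrite eqxx Sn_neq n_neqS eqxx.
- apply/eqP/eq_seq_nth; first by rewrite !size_set_nth; lia.
  move=> k; nsn; case: (k =P i.+1) => [->|_]; rewrite ?Sn_neq ?eqxx //=.
  by case: (k =P i) => [->|_]; rewrite ?eqxx.
- by nsn; rewrite eqxx Sn_neq n_neqS eqxx.
- apply/eqP/eq_seq_nth; first by rewrite !size_set_nth; lia.
  move=> k; nsn; case: (k =P i.+1) => [->|_]; rewrite ?Sn_neq ?eqxx //=.
  by case: (k =P i) => [->|_]; rewrite ?eqxx.
Qed.

Lemma sum_tuple_ifg (R : pzRingType) n (g : seq bool -> R) (P : bool) x k : size x = n ->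
  \sum_(C : n.-tuple bool) g (val C) * (if P && (val C == x) then k else 0) = if P then g x * k else 0.
Proof.
move=> hx; case: P => /=; last by rewrite big1 // => C _; rewrite mulr0.
have hx' : size x == n by apply/eqP.
rewrite (bigD1 (Tuple hx')) //= eqxx big1 ?addr0 // => C hC.
rewrite ifF ?mulr0 //; apply/negbTE; apply: contra hC => /eqP e; apply/eqP; apply: val_inj; exact e.
Qed.

Lemma sum_tuple_if (R : pzRingType) n (P : bool) x k : size x = n ->
  \sum_(C : n.-tuple bool) (if P && (val C == x) then k else 0) = if P then k else 0 :> R.
Proof.
move=> hx; have := @sum_tuple_ifg R n (fun _ => 1) P x k hx.
by under eq_bigr do rewrite mul1r; rewrite mul1r.
Qed.

Lemma out_sum (R : nzRingType) (a b : R) m (C : m.+1.-tuple bool) :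
  \sum_(C' : m.+1.-tuple bool) W a b C C' =
  (if ~~ nth false C 0 then a else 0) + (if nth false C m then b else 0)
  + \sum_(i < m) (if nth false C i && ~~ nth false C i.+1 then 1 else 0).
Proof.
rewrite /W !big_split /= exchange_big /=.
have hc := size_tuple C.
rewrite !sum_tuple_if ?size_set_nth ?hc //; try lia.
congr (_ + _); apply: eq_bigr => i _; rewrite sum_tuple_if // !size_set_nth hc; have := ltn_ord i; lia.
Qed.

Lemma in_sum (R : nzRingType) (a b : R) m (f : seq bool -> R) (C : m.+1.-tuple bool) :
  \sum_(C' : m.+1.-tuple bool) f (val C') * W a b C' C =
  (if nth false C 0 then f (set_nth false C 0 false) * a else 0)
  + (if ~~ nth false C m then f (set_nth false C m true) * b else 0)
  + \sum_(i < m) (if ~~ nth false C i && nth false C i.+1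
                  then f (set_nth false (set_nth false C i true) i.+1 false) * 1 else 0).
Proof.
have hc := size_tuple C.
rewrite /W.
under eq_bigr do rewrite !mulrDr mulr_sumr.
rewrite !big_split /= exchange_big /=.
rewrite -(@sum_tuple_ifg R m.+1 f _ (set_nth false C 0 false)); last by rewrite size_set_nth hc; lia.
rewrite -(@sum_tuple_ifg R m.+1 f _ (set_nth false C m true)); last by rewrite size_set_nth hc; lia.
congr (_ + _ + _).
- apply: eq_bigr => C' _; by rewrite (@E1 C C' m) ?size_tuple.
- apply: eq_bigr => C' _; by rewrite (@E2 C C' m) ?size_tuple.
- apply: eq_bigr => i _.
  rewrite -(@sum_tuple_ifg R m.+1 f _ (set_nth false (set_nth false C i true) i.+1 false)); last first.
    rewrite !size_set_nth hc; have := ltn_ord i; lia.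
  apply: eq_bigr => C' _; by rewrite (@E3 C C' m) ?size_tuple.
Qed.

Definition dd (R : fieldType) (a b : R) m (c : seq bool) j :=
  (if nth false c j then -1 else 1) * Fw a b m (take j c ++ drop j.+1 c).

Lemma left_term (R : fieldType) (a b : R) m (c : seq bool) : size c = m.+1 -> a != 0 ->
  (if nth false c 0 then Fw a b m.+1 (set_nth false c 0 false) * a else 0)
  = Fw a b m.+1 c * (if ~~ nth false c 0 then a else 0) - dd a b m c 0.
Proof.
case: c => // x w _ a0; rewrite /dd /= drop0.
case: x => /=; rewrite F_left.
  by rewrite mulr0 sub0r mulN1r opprK mulrC mulrA mulfV // mul1r.
by rewrite mul1r mulrC mulrA mulfV // mul1r subrr.
Qed.

Lemma set_nth_rcons (w : seq bool) x y : set_nth false (rcons w x) (size w) y = rcons w y.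
Proof. by elim: w => //= z w ->. Qed.

Lemma right_term (R : fieldType) (a b : R) m (c : seq bool) : size c = m.+1 -> b != 0 ->
  (if ~~ nth false c m then Fw a b m.+1 (set_nth false c m true) * b else 0)
  = Fw a b m.+1 c * (if nth false c m then b else 0) + dd a b m c m.
Proof.
case/lastP: c => [|w x] // hs b0; rewrite size_rcons in hs; case: hs => hs.
have et : take (size w) (rcons w x) ++ drop (size w).+1 (rcons w x) = w.
  by rewrite -cats1 take_size_cat // drop_oversize ?cats0 // size_cat /= addn1.
rewrite /dd -hs nth_rcons ltnn eqxx set_nth_rcons et; clear et.
case: x => /=; rewrite F_right //.
  by rewrite mulN1r mulrC mulrA mulfV // mul1r addrN.
by rewrite mulr0 add0r mul1r mulrC mulrA mulfV // mul1r.
Qed.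

Lemma set_nth_size_cat0 (u w : seq bool) y :
  set_nth false (u ++ w) (size u) y = u ++ set_nth false w 0 y.
Proof. by elim: u => //= z u ->. Qed.
Lemma set_nth_size_cat1 (u w : seq bool) y :
  set_nth false (u ++ w) (size u).+1 y = u ++ set_nth false w 1 y.
Proof. by elim: u => //= z u ->. Qed.
Lemma take_size_cat1 (u w : seq bool) : take (size u).+1 (u ++ w) = u ++ take 1 w.
Proof. by elim: u => //= z u ->. Qed.
Lemma drop_size_cat1 (u w : seq bool) : drop (size u).+1 (u ++ w) = drop 1 w.
Proof. by elim: u. Qed.
Lemma drop_size_cat2 (u w : seq bool) : drop (size u).+2 (u ++ w) = drop 2 w.
Proof. by elim: u. Qed.

Lemma bond_term (R : fieldType) (a b : R) m u a0 b0 v : (size u + size v + 1)%N = m ->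
  let c := u ++ a0 :: b0 :: v in
  (if ~~ nth false c (size u) && nth false c (size u).+1
   then Fw a b m.+1 (set_nth false (set_nth false c (size u) true) (size u).+1 false) * 1 else 0)
  = Fw a b m.+1 c * (if nth false c (size u) && ~~ nth false c (size u).+1 then 1 else 0)
    + (dd a b m c (size u) - dd a b m c (size u).+1).
Proof.
move=> huv c; rewrite /c /dd nth_size_cat0 nth_size_cat1 /=.
rewrite set_nth_size_cat0 set_nth_size_cat1 take_size_cat // take_size_cat1.
rewrite drop_size_cat1 drop_size_cat2 /=.
have Fm := @F_mid R a b m u v huv; clear c.
rewrite drop0 -catA /=.
case: a0; case: b0 => /=; rewrite ?Fm; ring.
Qed.

Lemma bond_term' (R : fieldType) (a b : R) m (c : seq bool) i : size c = m.+1 -> (i < m)%N ->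
  (if ~~ nth false c i && nth false c i.+1
   then Fw a b m.+1 (set_nth false (set_nth false c i true) i.+1 false) * 1 else 0)
  = Fw a b m.+1 c * (if nth false c i && ~~ nth false c i.+1 then 1 else 0)
    + (dd a b m c i - dd a b m c i.+1).
Proof.
move=> hc hi.
have e : c = take i c ++ nth false c i :: nth false c i.+1 :: drop i.+2 c.
  have h1 : (i.+1 < size c)%N by rewrite hc ltnS.
  have h0 : (i < size c)%N by rewrite hc ltnS ltnW.
  by rewrite -(drop_nth false h1) -(drop_nth false h0) cat_take_drop.
have := @bond_term R a b m (take i c) (nth false c i) (nth false c i.+1) (drop i.+2 c).
rewrite size_takel ?hc //; last by lia.
rewrite -e; apply; rewrite size_drop hc; lia.
Qed.

Lemma tele (R : zmodType) (d : nat -> R) m : \sum_(i < m) (d i - d i.+1) = d 0%N - d m.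
Proof.
elim: m => [|m IH]; first by rewrite big_ord0 subrr.
by rewrite big_ord_recr /= IH addrA addrNK.
Qed.

Lemma PstE (R : fieldType) (a b : R) n (C : n.-tuple bool) :
  Pst a b C = (Zn a b n)^-1 * Fw a b n (val C).
Proof. by []. Qed.

Theorem proposition1 (R : realFieldType) (n : nat) (alpha beta : R) :
  (1 <= n)%N -> 0 < alpha <= 1 -> 0 < beta <= 1 ->
  forall C : n.-tuple bool,
    Pst alpha beta C * (\sum_(C' : n.-tuple bool) W alpha beta C C')
    = \sum_(C' : n.-tuple bool) Pst alpha beta C' * W alpha beta C' C.
Proof.
move=> hn /andP [ha _] /andP [hb _] C.
have a0 : alpha != 0 by rewrite gt_eqF.
have b0 : beta != 0 by rewrite gt_eqF.
case: n hn C => // m _ C.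
rewrite PstE; under [RHS]eq_bigr do rewrite PstE.
rewrite -mulrA; under [RHS]eq_bigr do rewrite -mulrA.
rewrite -mulr_sumr; congr (_ * _).
rewrite out_sum (@in_sum _ _ _ _ (Fw alpha beta m.+1)).
have hc := size_tuple C.
rewrite (@left_term _ _ _ m) // (@right_term _ _ _ m) //.
rewrite [in RHS](eq_bigr (fun i : 'I_m => Fw alpha beta m.+1 C *
   (if nth false C i && ~~ nth false C i.+1 then 1 else 0)
    + (dd alpha beta m C i - dd alpha beta m C i.+1))); last first.
  by move=> i _; rewrite bond_term'.
rewrite big_split /= tele -mulr_sumr.
have H : forall x a b s d0 dm : R, x * (a + b + s) = x * a - d0 + (x * b + dm) + (x * s + (d0 - dm)).
  by move=> x a b s d0 dm; ring.
by apply: H.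
Qed.
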